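(* Let $(P,e)$, $P\in\mathcal{T}_k$, be a friendly tree pattern, let $\sigma(P,e)=(\tau(P),C)$ be its associated mesh pattern, let $i$ be the position of the largest value $k$ in $\tau(P)$, and let $\sigma^-(P,e)=(\tau(P),C\setminus\{(i-1,k)\})$. Then for every $n\ge 0$, $S_n(231,\sigma(P,e))=S_n(231,\sigma^-(P,e))$.
   Context: Binary trees: $\mathcal{T}_k$ is the set of binary trees on $k$ vertices labeled $1,\dots,k$ by the search tree property. $c_L(i),c_R(i),p(i)$: left child, right child, parent ($\varepsilon$ if nonexistent); $r(P)$ root; $P(i)$ subtree rooted at $i$; $L(i),R(i)$ subtrees rooted at $c_L(i),c_R(i)$. $B_R(i)=\{i,c_R(i),c_R^2(i),\dots\}$ is the vertex set of the right branch starting at $i$; $B_R^-(i)$ is $B_R(i)$ minus its last vertex. A tree pattern is $(P,e)$ with $e\colon[k]\setminus\{r(P)\}\to\{0,1\}$. Preorder: $\tau(\varepsilon)=$ empty, $\tau(P)=(r(P),\tau(L(P)),\tau(R(P)))$. $(P,e)$ is friendly if: (i) $p(k)\neq\varepsilon$ and $c_L(k)\neq\varepsilon$; (ii) $e(j)=0$ for all $j\in B_R^-(r(P))\setminus\{r(P)\}$; (iii) if $e(k)=1$ then $e(c_L(k))=0$. Mesh patterns: $(\tau,C)$ with $\tau\in S_k$, $C\subseteq\{0,\dots,k\}^2$; $\pi\in S_n$ contains it if there are indices $\nu_1<\dots<\nu_k$ with $\pi(\nu_1),\dots,\pi(\nu_k)$ order-isomorphic to $\tau$ and, with $\lambda_1<\dots<\lambda_k$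 these values sorted and $\nu_0=\lambda_0=0$, $\nu_{k+1}=\lambda_{k+1}=n+1$, no point $(j,\pi(j))$ lies in $(\nu_a,\nu_{a+1})\times(\lambda_b,\lambda_{b+1})$ for $(a,b)\in C$. Classical patterns are the case $C=\emptyset$. $S_n(\sigma_1,\sigma_2)$ is the set of permutations of $[n]$ avoiding both. $\sigma(P,e)$: with $\rho=\tau(P)^{-1}$, $C_j=\{(\rho(j)-1,m):m\in B_R^-(j)\}$ for $j\in[k]$; for non-root $j$, $C_j'=\emptyset$ if $e(j)=0$ and $C_j'=\{(\rho(j)-1,\min P(j)-1),(\rho(j)-1,\max P(j))\}$ if $e(j)=1$; $\sigma(P,e)=(\tau(P),\bigcup_jC_j\cup\bigcup_jC_j')$. *)

(* Defs.v *)
From mathcomp Require Import all_boot.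
Set Implicit Arguments. Unset Strict Implicit. Unset Printing Implicit Defensive.

(* ---------- Binary trees, labeled 1..k in in-order (search tree property) ---------- *)
Inductive btree := BLeaf | BNode of btree & btree.

Fixpoint bsize (t : btree) : nat :=
  match t with BLeaf => 0 | BNode l r => (bsize l + bsize r).+1 end.

(* Label of the root of subtree [t] whose labels are o+1 .. o+bsize t. *)
Definition root_at (t : btree) (o : nat) : option nat :=
  match t with BLeaf => None | BNode l _ => Some (o + bsize l + 1) end.

(* r(P) (0 for the empty tree, never used there) *)
Definition troot (P : btree) : nat := odflt 0 (root_at P 0).

(* The subtree P(j) rooted at label j, together with its label offset o:
   its labels are o+1 .. o + bsize (subtree). *)
Fixpoint find_sub (t : btree) (o j : nat) : option (btree * nat) :=
  match t with
  | BLeaf => None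
  | BNode l r =>
      let rt := o + bsize l + 1 in
      if j == rt then Some (t, o)
      else if j < rt then find_sub l o j else find_sub r rt j
  end.

Definition subP (P : btree) (j : nat) := find_sub P 0 j.

(* c_L(j), c_R(j)  (None = epsilon) *)
Definition cL (P : btree) (j : nat) : option nat :=
  match subP P j with Some (BNode l _, o) => root_at l o | _ => None end.
Definition cR (P : btree) (j : nat) : option nat :=
  match subP P j with Some (BNode _ r, _) => root_at r j | _ => None end.

(* p(j) <> epsilon  iff  j is a vertex other than the root *)
Definition has_parent (P : btree) (j : nat) : bool :=
  (0 < j <= bsize P) && (j != troot P).

Fixpoint rbranch (t : btree) (o : nat) : seq nat :=
  match t with
  | BLeaf => [::]
  | BNode l r => let rt := o + bsize l + 1 in rt :: rbranch r rt
  end.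

Definition BR (P : btree) (j : nat) : seq nat :=
  match subP P j with Some (t, o) => rbranch t o | None => [::] end.
Definition BRm (P : btree) (j : nat) : seq nat :=
  let s := BR P j in take (size s).-1 s.

(* preorder tau(P), as a sequence of labels = one-line notation of a permutation *)
Fixpoint preorder (t : btree) (o : nat) : seq nat :=
  match t with
  | BLeaf => [::]
  | BNode l r => let rt := o + bsize l + 1 in rt :: preorder l o ++ preorder r rt
  end.
Definition tau (P : btree) : seq nat := preorder P 0.

(* ---------- friendly tree patterns; e : labels -> {0,1} (false = 0, true = 1);
   only the values of e on [k] \ {r(P)} are ever used ---------- *)
Definition friendly (P : btree) (e : nat -> bool) : Prop :=
  let k := bsize P in
  [/\ has_parent P k /\ cL P k <> None,
      (forall j, j \in BRm P (troot P) -> j != troot P -> e j = false)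
    & (e k -> forall c, cL P k = Some c -> e c = false)].

(* rho(j) - 1 = 0-based index of j in tau(P) *)
Definition shadeC (P : btree) (e : nat -> bool) (j : nat) : seq (nat * nat) :=
  let a := index j (tau P) in
  [seq (a, m) | m <- BRm P j] ++
  (if (j != troot P) && e j then
     match subP P j with
     | Some (t, o) => [:: (a, o); (a, o + bsize t)]   (* min P(j) - 1, max P(j) *)
     | None => [::]
     end
   else [::]).

Definition meshC (P : btree) (e : nat -> bool) : seq (nat * nat) :=
  flatten [seq shadeC P e j | j <- iota 1 (bsize P)].

(* sigma^-: remove the box (i-1, k), i = position of k in tau(P) *)
Definition meshC_minus (P : btree) (e : nat -> bool) : seq (nat * nat) :=
  [seq c <- meshC P e | c != (index (bsize P) (tau P), bsize P)].

(* pi (a permutation of [n] in one-line notation, values 1..n) contains the mesh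
   pattern (tp, C), tp a permutation of [k] in one-line notation. Positions are 1-based. *)
Definition mesh_contains (pi : seq nat) (tp : seq nat) (C : seq (nat * nat)) : Prop :=
  let n := size pi in
  let k := size tp in
  exists nu : seq nat,
    [/\ size nu = k, sorted ltn nu, all (fun x => 0 < x <= n) nu,
        (let vals := [seq nth 0 pi x.-1 | x <- nu] in
         forall a b, a < k -> b < k ->
           (nth 0 vals a < nth 0 vals b) = (nth 0 tp a < nth 0 tp b))
      & (let vals := [seq nth 0 pi x.-1 | x <- nu] in
         let nuE := 0 :: rcons nu n.+1 in
         let lamE := 0 :: rcons (sort leq vals) n.+1 in
         forall ab, ab \in C -> forall j, 0 < j <= n ->
           ~ ((nth 0 nuE ab.1 < j < nth 0 nuE ab.1.+1) /\
              (nth 0 lamE ab.2 < nth 0 pi j.-1 < nth 0 lamE ab.2.+1)))].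

Definition mesh_avoids pi tp C := ~ mesh_contains pi tp C.

Definition p231 : seq nat := [:: 2; 3; 1].

Definition in_Sn_231 (n : nat) (tp : seq nat) (C : seq (nat * nat)) (pi : seq nat) : Prop :=
  perm_eq pi (iota 1 n) /\ mesh_avoids pi p231 [::] /\ mesh_avoids pi tp C.

(* Main.v *)
Require Import Defs.
From mathcomp Require Import all_boot zify.

Lemma pre_perm t O : perm_eq (preorder t O) (iota O.+1 (bsize t)).
Proof.
elim: t O => [|l IHl r IHr] O; first by [].
have -> : iota O.+1 (bsize (BNode l r)) =
   iota O.+1 (bsize l) ++ (O + bsize l + 1) :: iota (O + bsize l + 1).+1 (bsize r).
  have e : bsize (BNode l r) = bsize l + (1 + bsize r) by rewrite /=; lia.
  rewrite e !iotaD.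
  have -> : O.+1 + bsize l = O + bsize l + 1 by lia.
  by rewrite /= !addn1.
rewrite /= perm_sym -cat1s. rewrite perm_catCA. rewrite /= perm_cons.
rewrite perm_sym; exact: perm_cat.
Qed.

Lemma fs_bounds t O j s o : find_sub t O j = Some (s,o) ->
  [/\ O <= o, o + bsize s <= O + bsize t & exists l r, s = BNode l r /\ j = o + bsize l + 1].
Proof.
elim: t O => [|l IHl r IHr] O //=.
case: eqP => [-> [<- <-]|_]; first by split => //; exists l, r.
case: ltnP => _ /=.
  by case/IHl => h1 h2 h3; split => //; lia.
by case/IHr => h1 h2 h3; split => //; lia.
Qed.

Arguments fs_bounds {t O j s o}.

Lemma fs_root l r O : find_sub (BNode l r) O (O + bsize l + 1) = Some (BNode l r, O).
Proof. by rewrite /= eqxx. Qed.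

Lemma fs_left t O j ll lr r o : find_sub t O j = Some (BNode (BNode ll lr) r, o) ->
  find_sub t O (o + bsize ll + 1) = Some (BNode ll lr, o).
Proof.
elim: t O => [|l IHl r0 IHr] O //=.
case: eqP => [_ [-> _ <-]|_]. rewrite /=; case: eqP => [?|_]; first lia. case: ltnP => ?; last lia. by rewrite eqxx. 
case: ltnP => hj /= H.
  have := fs_bounds H => -[h1 h2 _]. rewrite /= in h2.
  case: eqP => [?|_]; first lia. rewrite ifT; first exact: IHl. lia.
have := fs_bounds H => -[h1 h2 _]. rewrite /= in h2.
case: eqP => [?|_]; first lia. rewrite ifF; first exact: IHr. lia.
Qed.

Lemma rb_take l r o m : m \in take (size (rbranch (BNode l r) o)).-1 (rbranch (BNode l r) o) ->
  o + bsize l + 1 <= m < o + bsize (BNode l r).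
Proof.
elim: r l o => [|rl _ rr IH] l o; first by [].
rewrite [rbranch _ _]/= [size _]/= /= in_cons.
case/orP => [/eqP ->|]; first lia.
move/(IH rl) => /=; lia.
Qed.

Lemma fs_K t O : 0 < bsize t -> exists ls o' X,
  find_sub t O (O + bsize t) = Some (BNode ls BLeaf, o') /\
  preorder t O = X ++ preorder (BNode ls BLeaf) o'.
Proof.
elim: t O => [|l _ r IHr] O //= _.
case: r IHr => [|rl rr] IHr.
  exists l, O, [::]; rewrite /=; case: eqP => [_|]; first by rewrite cats0.
  move=> h; exfalso; apply: h; lia.
have [ls [o' [X [h1 h2]]]] := IHr (O + bsize l + 1) isT.
exists ls, o', (O + bsize l + 1 :: preorder l O ++ X).
have hp : 0 < bsize (BNode rl rr) by []. case: eqP => [?|_]; first lia. rewrite ifF; last lia.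
have -> : O + (bsize l + bsize (BNode rl rr)).+1 = O + bsize l + 1 + bsize (BNode rl rr) by lia.
by rewrite h1 h2 /= catA.
Qed.

Definition good t O := match find_sub t O (O + bsize t) with
  Some (BNode l _, _) => 0 < bsize l | _ => false end.

Lemma good_r l rl rr O : good (BNode l (BNode rl rr)) O -> good (BNode rl rr) (O + bsize l + 1).
Proof.
rewrite /good.
have -> : O + bsize (BNode l (BNode rl rr)) = O + bsize l + 1 + bsize (BNode rl rr) by rewrite /=; lia.
rewrite [find_sub (BNode l _) _ _]/=.
have hp : 0 < bsize (BNode rl rr) by [].
case: eqP => [?|_]; first lia. by rewrite ifF; last lia.
Qed.

Arguments good_r {l rl rr O}.

Lemma no_km1 t O : good t O -> forall j s o, find_sub t O j = Some (s,o) ->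
  (O + bsize t).-1 \notin take (size (rbranch s o)).-1 (rbranch s o).
Proof.
elim: t O => [|l IHl r IHr] O //.
have Hleft : forall j s o, j < O + bsize l + 1 -> find_sub l O j = Some (s, o) ->
   (O + bsize (BNode l r)).-1 \notin take (size (rbranch s o)).-1 (rbranch s o).
  move=> j s o hj H; have [h1 h2 [sl [sr [Es _]]]] := fs_bounds H; subst s.
  apply/negP => /rb_take; rewrite /=; rewrite /= in h2; lia.
case: r IHr Hleft => [|rl rr] IHr Hleft.
  rewrite /good; have hK : O + bsize (BNode l BLeaf) = O + bsize l + 1 by rewrite /=; lia.
  rewrite hK in Hleft *.
  rewrite fs_root => hl j s o /=.
  case: eqP => [_ [<- <-]|_] //.
  case: ltnP => hj //; exact: Hleft.
move=> hg; have hg' := good_r hg; clear hg.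
have hK : O + bsize (BNode l (BNode rl rr)) = O + bsize l + 1 + bsize (BNode rl rr) by rewrite /=; lia.
have [ls [x [o' [E hls]]]] : exists ls x o', find_sub (BNode rl rr) (O + bsize l + 1)
   (O + bsize l + 1 + bsize (BNode rl rr)) = Some (BNode ls x, o') /\ 0 < bsize ls.
  move: hg'; rewrite /good.
  case: (find_sub (BNode rl rr) (O + bsize l + 1) (O + bsize l + 1 + bsize (BNode rl rr)))
     => [[[|ls x] o']|] //; eauto.
have hp : 0 < bsize (BNode rl rr) by [].
move=> j s o /=.
have [h1 h2 _] := fs_bounds E.
case: eqP => [_ [<- <-]|_].
  rewrite [rbranch _ _]/= [size _]/= /= in_cons negb_or; apply/andP; split.
    apply/eqP; rewrite /= in h2; rewrite /=; lia.
  have := IHr _ hg' _ _ _ (fs_root rl rr (O + bsize l + 1)).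
  by rewrite /= -hK.
case: ltnP => hj; first exact: Hleft.
by move/(IHr _ hg'); rewrite -hK.
Qed.

Lemma pre_mem t O x : (x \in preorder t O) = (O < x <= O + bsize t).
Proof. by rewrite (perm_mem (pre_perm t O)) mem_iota; apply/idP/idP; lia. Qed.

Lemma notin_left l O x : O + bsize l < x -> x != O + bsize l + 1 ->
  (x \in O + bsize l + 1 :: preorder l O) = false.
Proof. by move=> h1 h2; rewrite in_cons pre_mem (negbTE h2) /=; apply/negbTE; lia. Qed.

Lemma p2 t O : good t O -> forall j s o, find_sub t O j = Some (s,o) ->
  o + bsize s = (O + bsize t).-1 ->
  index (O + bsize t) (preorder t O) < index j (preorder t O).
Proof.
elim: t O => [|l IHl r IHr] O //.
move=> hg j s o H.
have [h1 h2 [sl [sr [Es hj]]]] := fs_bounds H; subst s.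
move: H; rewrite [find_sub _ _ _]/=.
case: eqP => [hj' [<- <-]|hne]; first by rewrite /=; lia.
case: ltnP => hlt H.
  have [h1' h2' _] := fs_bounds H.
  case: r IHr hg {h2} => [|rl rr] IHr hg; last by rewrite /= in h2' *; lia.
  move=> _; have -> : O + bsize (BNode l BLeaf) = O + bsize l + 1 by rewrite /=; lia.
  rewrite /= eqxx; case: eqP => //; lia.
case: r IHr hg H {h2} => [|rl rr] IHr hg H; first by [].
have hg' := good_r hg.
have hK : O + bsize (BNode l (BNode rl rr)) = O + bsize l + 1 + bsize (BNode rl rr) by rewrite /=; lia.
rewrite hK => hE.
have := IHr _ hg' _ _ _ H hE; rewrite -hK.
rewrite [preorder (BNode l _) O]/= -cat_cons !index_cat.
rewrite /= in hK; rewrite !notin_left ?ltn_add2l //; rewrite /=; try apply/eqP; lia.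
Qed.

Lemma shade_fst P e j ab : ab \in shadeC P e j -> ab.1 = index j (tau P).
Proof.
rewrite /shadeC mem_cat => /orP [/mapP [m _ ->] //|].
case: ifP => _ //; case: (subP P j) => [[t o]|] //.
by rewrite !inE => /orP [] /eqP ->.
Qed.

Arguments shade_fst {P e j ab}.
Arguments no_km1 {t O} _ {j s o}.
Arguments p2 {t O} _ {j s o}.

Lemma tree_facts k P e : bsize P = k -> friendly P e ->
  let tp := tau P in let a := index k tp in
  [/\ size tp = k, perm_eq tp (iota 1 k), nth 0 tp a = k, 0 < a /\ a.+1 < k &
   (if e k then (forall r, (a.+1, r) \in meshC P e -> nth 0 tp a.+1 <= r /\ r.+1 < k) /\
                (forall c, (c, k.-1) \in meshC P e -> a.+2 <= c /\ c < k)
    else (a, k) \notin meshC P e)].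
Proof.
move=> hk [[hpar hcl] hii hiii] tp a.
have hperm : perm_eq tp (iota 1 k) by rewrite /tp /tau -hk; exact: pre_perm.
have hsz : size tp = k by rewrite (perm_size hperm) size_iota.
have huniq : uniq tp by rewrite (perm_uniq hperm) iota_uniq.
have hmem : forall x, (x \in tp) = (0 < x <= k) by move=> x; rewrite (perm_mem hperm) mem_iota; apply/idP/idP; lia.
have kpos : 0 < k by move: hpar; rewrite /has_parent hk; case/andP => /andP [] h _ _; lia.
have [ls [o' [X [hK hpre]]]] := fs_K P 0 (ltac:(lia)).
rewrite add0n hk in hK.
have [_ _ [ls' [x' [Ex hko]]]] := fs_bounds hK.
case: Ex => Els Ex; subst ls' x'.
move: hcl; rewrite hk /cL /subP hK; case: ls hK hko hpre => [|ll lr] //= hK hko hpre _.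
set c := o' + bsize ll + 1.
have hc : find_sub P 0 c = Some (BNode ll lr, o') by exact: fs_left hK.
have [Y htp] : exists Y, tp = X ++ k :: c :: Y.
  exists (preorder ll o' ++ preorder lr c ++ [::]); by rewrite /tp /tau hpre /= hko -catA.
have kX : k \notin X.
  by move: huniq; rewrite htp cat_uniq => /and3P [_ /hasPn H _]; apply: H; rewrite inE eqxx.
have ha : a = size X by rewrite /a htp index_cat (negbTE kX) /= eqxx addn0.
have hnk : nth 0 tp a = k by rewrite ha htp nth_cat ltnn subnn.
have hnc : nth 0 tp a.+1 = c by rewrite ha htp nth_cat ltnNge leqnSn /= subSnn.
have apos : 0 < a.
  rewrite ha; case: X htp {kX ha hnk hnc hpre} => [|x X] //= htp.
  move: hpar; rewrite /has_parent; case/andP => _; rewrite /troot.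
  have [Z hZ] : exists Z, tau P = troot P :: Z.
    move: kpos; rewrite -hk; case: (P) => [|l r] //= _; eexists; reflexivity.
  by move: htp; rewrite /tp hZ => -[hh _]; rewrite hk -hh /troot eqxx.
have ak : a.+1 < k by rewrite -hsz htp size_cat /= ha; lia.
split => //.
have hmesh : forall ab, ab \in meshC P e -> exists2 j, 0 < j <= k & ab \in shadeC P e j.
  move=> ab /flatten_mapP [j]; rewrite mem_iota hk => hj H; exists j => //; lia.
have hjin : forall j, 0 < j <= k -> j \in tp by move=> j hj; rewrite hmem.
have hidxc : forall j, 0 < j <= k -> index j tp = a.+1 -> j = c.
  by move=> j /hjin hj hi; rewrite -hnc -hi nth_index.
have hidxk : forall j, 0 < j <= k -> index j tp = a -> j = k.
  by move=> j /hjin hj hi; rewrite -hnk -hi nth_index.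
have hgood : good P 0 by rewrite /good add0n hk hK.
have hcL : cL P k = Some c by rewrite /cL /subP hK.
case: ifP => hek.
  have hec : e c = false by apply: (hiii _ c); rewrite hk.
  split.
    move=> r /hmesh [j hj hsh]; have /= hi := shade_fst hsh.
    have ejc := hidxc j hj (esym hi); subst j.
    move: hsh; rewrite /shadeC hec andbF cats0 => /mapP [m hm [_ ->]].
    move: hm; rewrite /BRm /BR /subP hc => /rb_take; rewrite hnc /=; lia.
  move=> c0 /hmesh [j hj hsh]; have /= hi := shade_fst hsh.
  have c0k : c0 < k by rewrite hi -hsz index_mem hjin.
  move: hsh; rewrite /shadeC mem_cat => /orP [/mapP [m hm [_ hm']]|].
    subst m; move: hm; rewrite /BRm /BR.
    case E: (subP P j) => [[t o]|] //.
    by have := no_km1 hgood E; rewrite add0n hk => /negbTE ->.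
  case: ifP => // /andP [hnr hej].
  case E: (subP P j) => [[t o]|] //; rewrite !inE => /orP [] /eqP [_ h].
    have [h1 h2 [tl [tr [Et hjo]]]] := fs_bounds E; subst t.
    rewrite add0n hk /= in h2.
    have ejk : j = k by lia.
    move: E; rewrite ejk /subP hK => -[_ _ ho]; rewrite /= in hko; lia.
  have := p2 hgood E; rewrite add0n hk -h => /(_ erefl) hlt.
  split => //; rewrite -/tp -/a -hi in hlt.
  case: (ltngtP a.+1 c0) => //; first lia.
  by move=> hh; have ejc := hidxc j hj (etrans (esym hi) (esym hh)); subst j; rewrite hec in hej.
apply/negP => /hmesh [j hj hsh]; have /= hi := shade_fst hsh.
have ejk := hidxk j hj (esym hi); subst j.
by move: hsh; rewrite /shadeC hek andbF cats0 /BRm /BR /subP hK.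
Qed.
Lemma map_index_uniq (s : seq nat) : uniq s -> [seq index x s | x <- s] = iota 0 (size s).
Proof.
move=> hu; apply: (@eq_from_nth _ 0); first by rewrite size_map size_iota.
move=> i; rewrite size_map => hi.
by rewrite (nth_map 0) // index_uniq // nth_iota.
Qed.

Lemma sort_iso (tp vals : seq nat) k : size tp = k -> size vals = k -> perm_eq tp (iota 1 k) ->
  (forall a b, a < k -> b < k -> (nth 0 vals a < nth 0 vals b) = (nth 0 tp a < nth 0 tp b)) ->
  sort leq vals = [seq nth 0 vals (index r tp) | r <- iota 1 k].
Proof.
move=> hs hv hp hiso.
have hmem : forall x, (x \in tp) = (0 < x <= k).
  by move=> x; rewrite (perm_mem hp) mem_iota; apply/idP/idP; lia.
have hu : uniq tp by rewrite (perm_uniq hp) iota_uniq.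
apply: (sorted_eq leq_trans anti_leq); first exact: (sort_sorted leq_total).
  apply/(sortedP 0) => i; rewrite size_map size_iota => hi.
  rewrite !(nth_map 0) ?size_iota //; try lia.
  rewrite !nth_iota; try lia.
  have h1 : 1 + i \in tp by rewrite hmem; lia.
  have h2 : 1 + i.+1 \in tp by rewrite hmem; lia.
  apply: ltnW; rewrite hiso ?nth_index // -hs index_mem //.
rewrite perm_sort.
have -> : [seq nth 0 vals (index r tp) | r <- iota 1 k] =
   [seq nth 0 vals i | i <- [seq index r tp | r <- iota 1 k]] by rewrite -map_comp.
rewrite -{1}(mkseq_nth 0 vals) /mkseq; apply: perm_map.
rewrite hv -hs -map_index_uniq // perm_sym; apply: perm_map.
by rewrite hs perm_sym.
Qed.

Arguments sort_iso {tp vals k}.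

Definition ext (s : seq nat) z i := nth 0 (0 :: rcons s z) i.

Lemma ext_set s z a y i : a < size s ->
  ext (set_nth 0 s a y) z i = if i == a.+1 then y else ext s z i.
Proof.
move=> ha; rewrite /ext; case: i => [|i] //=.
rewrite !nth_rcons size_set_nth (maxn_idPr ha) nth_set_nth /= eqSS.
case: (ltnP i (size s)) => hi; first by [].
have : (i == a) = false by apply/eqP; lia. by move=> ->.
Qed.

Lemma ext_in s z i : 0 < i <= size s -> ext s z i = nth 0 s i.-1.
Proof. case: i => [|i] hi; first by []. by rewrite /ext /= nth_rcons ifT. Qed.

Lemma ext_end s z : ext s z (size s).+1 = z.
Proof. by rewrite /ext /= nth_rcons ltnn eqxx. Qed.

Lemma mk231 pi p1 p2 p3 : 0 < p1 -> p1 < p2 -> p2 < p3 -> p3 <= size pi ->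
  nth 0 pi p3.-1 < nth 0 pi p1.-1 -> nth 0 pi p1.-1 < nth 0 pi p2.-1 ->
  mesh_contains pi p231 [::].
Proof.
move=> h1 h2 h3 h4 h5 h6; exists [:: p1; p2; p3]; split => //=.
- by rewrite h2 h3.
- rewrite h1 ltnW ?h4 /=; lia.
- move=> a b ha hb.
  case: a ha => [|[|[|a]]] // _; case: b hb => [|[|[|b]]] // _ /=;
  apply/idP/idP; lia.
Qed.

Lemma exists_max (s : seq nat) (f : nat -> nat) : s != [::] ->
  exists2 y, y \in s & forall z, z \in s -> f z <= f y.
Proof.
elim: s => [|x s IH] // _.
case: (s =P [::]) => [->|/eqP hne].
  by exists x; rewrite ?inE // => z; rewrite inE => /eqP ->.
have [y hy hm] := IH hne.
case: (leqP (f x) (f y)) => hxy.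
  exists y; first by rewrite inE hy orbT.
  by move=> z; rewrite inE => /orP [/eqP ->|/hm].
exists x; first by rewrite inE eqxx.
move=> z; rewrite inE => /orP [/eqP ->//|/hm]; lia.
Qed.

Lemma ext_cases s z i : ext s z i =
  if i == 0 then 0 else if i <= size s then nth 0 s i.-1 else if i == (size s).+1 then z else 0.
Proof.
rewrite /ext; case: i => [|i] //=; rewrite nth_rcons eqSS; by [].
Qed.

Lemma nth_map_iota (f : nat -> nat) k i : 0 < i <= k ->
  nth 0 [seq f r | r <- iota 1 k] i.-1 = f i.
Proof.
move=> hi; rewrite (nth_map 0) ?size_iota; last lia.
rewrite nth_iota; last lia. congr f; lia.
Qed.

Tactic Notation "slia" hyp_list(hs) := clear - hs; lia.

Lemma main_mesh tp C a k pi :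
  size tp = k -> perm_eq tp (iota 1 k) -> nth 0 tp a = k -> 0 < a -> a.+1 < k ->
  (forall r, (a.+1, r) \in C -> nth 0 tp a.+1 <= r /\ r.+1 < k) ->
  (forall c, (c, k.-1) \in C -> a.+2 <= c /\ c < k) ->
  uniq pi -> mesh_avoids pi p231 [::] ->
  mesh_contains pi tp [seq ab <- C | ab != (a, k)] -> mesh_contains pi tp C.
Proof.
move=> hs hp hnk apos ak HA HB hu h231 [nu [hnu hsort hall hiso0 hbox0]].
rewrite hs in hnu.
set N := size pi in hall hbox0 *.
set vals := [seq nth 0 pi x.-1 | x <- nu].
have hiso : forall b b', b < k -> b' < k ->
   (nth 0 vals b < nth 0 vals b') = (nth 0 tp b < nth 0 tp b') by move=> b b' hb hb'; apply: hiso0; rewrite hs.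
have hbox : forall ab, ab \in C -> ab != (a,k) -> forall j, 0 < j <= N ->
   ~ ((ext nu N.+1 ab.1 < j < ext nu N.+1 ab.1.+1) /\
      (ext (sort leq vals) N.+1 ab.2 < nth 0 pi j.-1 < ext (sort leq vals) N.+1 ab.2.+1)).
  by move=> ab h1 h2; apply: hbox0; rewrite mem_filter h2 h1.
clear hiso0 hbox0.
have hmem : forall x, (x \in tp) = (0 < x <= k).
  by move=> x; rewrite (perm_mem hp) mem_iota; apply/idP/idP; lia.
have hutp : uniq tp by rewrite (perm_uniq hp) iota_uniq.
have hvs : size vals = k by rewrite size_map.
have hidx : index k tp = a by rewrite -hnk index_uniq // hs; lia.
have Hlam := sort_iso hs hvs hp hiso.
have hsv : size (sort leq vals) = k by rewrite size_sort.
have hnuE : forall i, 0 < i <= k -> ext nu N.+1 i = nth 0 nu i.-1.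
  by move=> i hi; rewrite ext_in // hnu.
have hlamE : forall i, 0 < i <= k -> ext (sort leq vals) N.+1 i = nth 0 vals (index i tp).
  move=> i hi; rewrite ext_in ?hsv // Hlam (nth_map 0) ?size_iota; last lia.
  rewrite nth_iota; [congr (nth _ _ (index _ _)); lia | lia].
have hnuinc : forall i j, i < j -> j < k -> nth 0 nu i < nth 0 nu j.
  move=> i j hij hj; apply: (sorted_ltn_nth ltn_trans 0 hsort) => //; rewrite inE hnu; lia.
have hnur : forall i, i < k -> 0 < nth 0 nu i <= N.
  by move=> i hi; move/(all_nthP 0): hall => /(_ i); rewrite hnu => /(_ hi).
have hvn : forall b, b < k -> nth 0 vals b = nth 0 pi (nth 0 nu b).-1.
  by move=> b hb; rewrite (nth_map 0) // hnu.
have hinc : forall i j, 0 < i -> i < j -> j <= k ->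
    nth 0 vals (index i tp) < nth 0 vals (index j tp).
  move=> i j h1 h2 h3; have hi : i \in tp by rewrite hmem; lia.
  have hj : j \in tp by rewrite hmem; lia.
  by rewrite hiso ?nth_index // -hs index_mem.
have hvmax : forall b, b < k -> b != a -> nth 0 vals b < nth 0 vals a.
  move=> b hb hba; rewrite hiso // ?hnk; last lia.
  have : nth 0 tp b \in tp by rewrite mem_nth ?hs.
  rewrite hmem => /andP [_]; rewrite leq_eqVlt => /orP [|//].
  rewrite -{1}hnk nth_uniq ?hs //; [by rewrite (negbTE hba) | lia].
set inb := fun j => (ext nu N.+1 a < j < ext nu N.+1 a.+1) &&
   (ext (sort leq vals) N.+1 k < nth 0 pi j.-1 < ext (sort leq vals) N.+1 k.+1).
case Hh: (has inb (iota 1 N)).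
  have hS : [seq j <- iota 1 N | inb j] != [::] by rewrite -has_filter Hh.
  have [y hyS hymax] := exists_max _ (fun j => nth 0 pi j.-1) hS.
  have hEa : ext nu N.+1 a = nth 0 nu a.-1 by rewrite hnuE //; lia.
  have hEa1 : ext nu N.+1 a.+1 = nth 0 nu a by rewrite hnuE //; lia.
  have hLk : ext (sort leq vals) N.+1 k = nth 0 vals a by rewrite hlamE ?hidx //; lia.
  have hLk1 : ext (sort leq vals) N.+1 k.+1 = N.+1 by rewrite -hsv ext_end.
  move: hyS; rewrite mem_filter mem_iota /inb hEa hEa1 hLk hLk1.
  case/andP => /andP [/andP [hyl hyr] /andP [hvw hwN]] hyN.
  set w := nth 0 pi y.-1 in hvw hwN hymax.
  have hy0 : 0 < y <= N by lia.
  have hymax' : forall j : nat, 0 < j <= N -> nth 0 nu a.-1 < j < nth 0 nu a ->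
      nth 0 vals a < nth 0 pi j.-1 -> nth 0 pi j.-1 < N.+1 -> nth 0 pi j.-1 <= w.
    move=> j hj hj1 hj2 hj3; apply: hymax.
    by rewrite mem_filter mem_iota /inb hEa hEa1 hLk hLk1 hj1 hj2 hj3 /=; lia.
  have ha_nu : a < size nu by rewrite hnu; lia.
  set nu' := set_nth 0 nu a y.
  have hnu' : size nu' = k by rewrite size_set_nth (maxn_idPr ha_nu) hnu.
  have hE' : forall i, ext nu' N.+1 i = if i == a.+1 then y else ext nu N.+1 i.
    by move=> i; rewrite ext_set.
  set vals' := [seq nth 0 pi x.-1 | x <- nu'].
  have hvs' : size vals' = k by rewrite size_map.
  have hv' : forall b, b < k -> nth 0 vals' b = if b == a then w else nth 0 vals b.
    move=> b hb; rewrite (nth_map 0) ?hnu' // nth_set_nth /=.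
    by case: eqP => // _; rewrite hvn.
  have hiso' : forall b b', b < k -> b' < k ->
      (nth 0 vals' b < nth 0 vals' b') = (nth 0 tp b < nth 0 tp b').
    move=> b b' hb hb'; rewrite -hiso // !hv' //.
    case: (eqVneq b a) => [eba|hba]; case: (eqVneq b' a) => [eb'a|hb'a].
    - by rewrite eba eb'a !ltnn.
    - by have := hvmax _ hb' hb'a; rewrite eba; move=> hh; apply/idP/idP; lia.
    - by have := hvmax _ hb hba; rewrite eb'a; move=> hh; apply/idP/idP; lia.
    - by [].
  have Hlam' := sort_iso hs hvs' hp hiso'.
  have hsv' : size (sort leq vals') = k by rewrite size_sort.
  have hL' : forall i, ext (sort leq vals') N.+1 i =
      if i == k then w else ext (sort leq vals) N.+1 i.
    move=> i; rewrite !ext_cases hsv hsv'.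
    case: (eqVneq i k) => [->|hik].
      have -> : (k == 0) = false by apply/eqP; lia.
      rewrite leqnn Hlam' (nth_map 0) ?size_iota; last lia.
      rewrite nth_iota; last lia.
      have -> : 1 + k.-1 = k by lia.
      rewrite hv' ?hidx ?eqxx //; lia.
    case: (eqVneq i 0) => // hi0; case: ifP => // hik'.
    rewrite Hlam Hlam' !nth_map_iota; try lia.
    have hin : i \in tp by rewrite hmem; lia.
    rewrite hv'; last by rewrite -hs index_mem.
    case: eqP => // hia; exfalso; move: hik.
    by rewrite -(nth_index 0 hin) hia hnk eqxx.
  have hnu'n : forall i, nth 0 nu' i = if i == a then y else nth 0 nu i.
    by move=> i; rewrite nth_set_nth.
  suff Hbox : forall (c r : nat), (c, r) \in C -> forall j : nat, 0 < j <= N ->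
     ~ ((ext nu' N.+1 c < j < ext nu' N.+1 c.+1) /\
        (ext (sort leq vals') N.+1 r < nth 0 pi j.-1 < ext (sort leq vals') N.+1 r.+1)).
    exists nu'; split.
    - by rewrite hnu' hs.
    - apply/(sortedP 0) => i; rewrite hnu' => hi; rewrite !hnu'n.
      case: (eqVneq i a) => [->|hia]; first by rewrite /= ifF; [have := hnuinc a a.+1; lia | apply/eqP; lia].
      case: (eqVneq i.+1 a) => [hia1|hia1]; last by apply: hnuinc.
      by move: hyl; rewrite -hia1.
    - apply/(all_nthP 0) => i; rewrite hnu' => hi; rewrite hnu'n.
      by case: eqP => _; [|apply: hnur].
    - by move=> v0 b b'; rewrite hs; exact: hiso'.
    - move=> v0 nuE lamE [c r] hab j hj; exact: Hbox hab j hj.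
  move=> c r hab j hj; rewrite !hE' !hL' => -[/andP [hj1 hj2] /andP [hu1 hu2]].
  case: (eqVneq (c, r) (a, k)) => [[ec er]|hne].
    subst c r; move: hj1 hj2 hu1 hu2; rewrite eqxx ifF; last by apply/eqP; lia.
    rewrite eqxx ifF; last by apply/eqP; lia.
    rewrite hEa hLk1 => hj1 hj2 hu1 hu2.
    have := hymax' j hj; lia.
  have hb := hbox (c, r) hab hne j hj; rewrite /= in hb.
  case: (eqVneq c a.+1) => [ec|nec].
    subst c; have [hr1 hr2] := HA r hab.
    have htpa1 : nth 0 tp a.+1 \in tp by rewrite mem_nth // hs.
    have hr0 : 0 < r by move: htpa1; rewrite hmem; lia.
    have e1 : (a.+2 == a.+1) = false by apply/eqP; clear; lia.
    have e2 : (r == k) = false by apply/eqP; slia hr2.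
    have e3 : (r.+1 == k) = false by apply/eqP; slia hr2.
    move: hj1 hj2 hu1 hu2; rewrite eqxx e1 e2 e3.
    have hE2 : ext nu N.+1 a.+2 = nth 0 nu a.+1 by rewrite hnuE //; slia ak.
    have hLr : ext (sort leq vals) N.+1 r = nth 0 vals (index r tp) by rewrite hlamE //; slia hr0 hr2.
    have hLr1 : ext (sort leq vals) N.+1 r.+1 = nth 0 vals (index r.+1 tp) by rewrite hlamE //; slia hr2.
    rewrite hE2 hLr hLr1; rewrite /= hEa1 hE2 hLr hLr1 in hb.
    move=> hj1 hj2 hu1 hu2.
    have hvk : nth 0 vals (index r.+1 tp) < nth 0 vals a by rewrite -hidx; apply: hinc; slia hr2.
    have hva1 : nth 0 vals a.+1 <= nth 0 vals (index r tp).
      case: (ltngtP (nth 0 tp a.+1) r) => h; last by rewrite -h index_uniq ?hs.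
        have := hinc (nth 0 tp a.+1) r; rewrite index_uniq ?hs //.
        by move=> H; apply: ltnW; apply: H => //; move: htpa1; rewrite hmem; slia hr2.
      slia h hr1.
    have hva : nth 0 vals a = nth 0 pi (nth 0 nu a).-1 by apply: hvn; slia ak.
    have hva1' : nth 0 vals a.+1 = nth 0 pi (nth 0 nu a.+1).-1 by apply: hvn.
    have hnaa1 : nth 0 nu a < nth 0 nu a.+1 by apply: hnuinc.
    have hna1N := hnur a.+1 ak.
    case: (ltngtP j (nth 0 nu a)) => hja.
    - apply: h231; apply: (mk231 _ j (nth 0 nu a) (nth 0 nu a.+1)).
      + slia hj1.
      + done.
      + done.
      + by case/andP: hna1N.
      + rewrite -hva1'; slia hu1 hva1.
      + rewrite -hva; slia hu2 hvk.
    - by apply: hb; split; apply/andP; split.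
    - by move: hu2; rewrite hja -hva; slia hvk.
  have kpos : 0 < k by slia ak.
  case: (eqVneq r k.-1) => [er|ner].
    subst r; have [hc1 hc2] := HB c hab.
    have e1 : (c.+1 == a.+1) = false by apply/eqP; slia hc1.
    have e2 : (k.-1 == k) = false by apply/eqP; slia kpos.
    have hk1 : k.-1.+1 = k by slia kpos.
    move: hj1 hj2 hu1 hu2; rewrite (negbTE nec) e1 e2 hk1 eqxx.
    rewrite /= hk1 hLk in hb.
    have hEc : ext nu N.+1 c = nth 0 nu c.-1 by rewrite hnuE //; slia hc1 hc2.
    have hEc1 : ext nu N.+1 c.+1 = nth 0 nu c by rewrite hnuE //; slia hc1 hc2.
    rewrite hEc hEc1; rewrite hEc hEc1 in hb.
    move=> hj1 hj2 hu1 hu2.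
    have hva : nth 0 vals a = nth 0 pi (nth 0 nu a).-1 by apply: hvn; slia ak.
    have hvc : nth 0 vals c = nth 0 pi (nth 0 nu c).-1 by apply: hvn.
    have hca : c != a by apply/eqP; slia hc1.
    have hvca := hvmax c hc2 hca.
    have hnac : nth 0 nu a < nth 0 nu c.-1 by apply: hnuinc; slia hc1 hc2.
    have hnaN := hnur a ltac:(slia ak).
    have hncN := hnur c hc2.
    case: (ltngtP (nth 0 pi j.-1) (nth 0 vals a)) => hua.
    - by apply: hb; split; apply/andP; split.
    - apply: h231; apply: (mk231 _ (nth 0 nu a) j (nth 0 nu c)).
      + by case/andP: hnaN.
      + slia hnac hj1.
      + done.
      + by case/andP: hncN.
      + by rewrite -hvc -hva.
      + by rewrite -hva.
    - move: hua; rewrite hva => /eqP; rewrite nth_uniq //; first last.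
      + by case/andP: hnaN => h1 h2; apply: leq_trans h2; slia h1.
      + by case/andP: hj => h1 h2; apply: leq_trans h2; slia h1.
      move/eqP => hj'; move: hnac hj1 hj'; case/andP: hj => h1 _; case/andP: hnaN => h2 _.
      slia h1 h2.
  have e3 : (r.+1 == k) = false by apply/eqP => h; move/eqP: ner; apply; slia h.
  apply: hb; move: hj1 hj2 hu1 hu2; rewrite (negbTE nec) e3.
  move=> hj1 hj2 hu1 hu2; split; apply/andP; split => //.
    move: hj2; case: eqP => // /eqP; rewrite eqSS => /eqP ->; rewrite hEa1; slia hyr.
  move: hu1; case: eqP => // ->; rewrite hLk; slia hvw.
exists nu; split; [by rewrite hs | done | done | | ].
  by move=> v0 b b'; rewrite hs; exact: hiso.
move=> v0 nuE lamE ab hab j hj [h1 h2]; case: (eqVneq ab (a,k)) => [eab|neab]; last exact: (hbox ab hab neab j hj (conj h1 h2)).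
subst ab; have hj' : j \in iota 1 N by rewrite mem_iota add1n ltnS.
move/hasPn: Hh => /(_ j hj').
by rewrite /inb h1 h2.
Qed.
Lemma contains_sub pi tp (C1 C2 : seq (nat * nat)) : {subset C1 <= C2} ->
  mesh_contains pi tp C2 -> mesh_contains pi tp C1.
Proof.
move=> hsub [nu [h1 h2 h3 h4 h5]]; exists nu; split => //.
move=> v0 nuE lamE ab hab; exact: h5 (hsub _ hab).
Qed.

Theorem lemma9 (k : nat) (P : btree) (e : nat -> bool) :
  bsize P = k -> friendly P e ->
  forall (n : nat) (pi : seq nat),
    in_Sn_231 n (tau P) (meshC P e) pi <-> in_Sn_231 n (tau P) (meshC_minus P e) pi.
Proof.
move=> hk hf n pi.
have [hs hp hnk [apos ak] hif] := tree_facts _ _ _ hk hf.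
have hsub : {subset meshC_minus P e <= meshC P e}.
  by move=> ab; rewrite mem_filter => /andP [].
have key : uniq pi -> mesh_avoids pi p231 [::] ->
    mesh_contains pi (tau P) (meshC_minus P e) -> mesh_contains pi (tau P) (meshC P e).
  move=> hu h231; move: hif; case: ifP => hek hif.
    case: hif => HA HB; rewrite /meshC_minus hk.
    exact: (main_mesh _ _ _ _ _ hs hp hnk apos ak HA HB hu h231).
  apply: contains_sub => ab hab; rewrite mem_filter hab andbT hk.
  by apply/eqP => eab; move: hif; rewrite -eab hab.
split => -[hperm [h1 h2]]; split => //; split => // hc; apply: h2.
  apply: key => //; by rewrite (perm_uniq hperm) iota_uniq.
exact: contains_sub hsub hc.
Qed.
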